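(* Let $(\mathcal{A},P,\Theta)$ be a combinatorial proto-exact category with duality (admitting finite coproducts, $P$ additive). Let $M_1,M_2$ be symmetric forms in $\mathcal{A}$ and let $i:U\rightarrowtail M_1\oplus M_2$ be isotropic. Then $i$ factors through isotropic inflations $i_k:U_k\rightarrowtail M_k$, $k=1,2$; that is, there is an isomorphism $f:U\to U_1\oplus U_2$ with $(i_1\oplus i_2)\circ f=i$.
   Context: Proto-exact category: pointed category with inflations $\rightarrowtail$ and deflations $\twoheadrightarrow$ (containing isomorphisms, closed under composition, $0\to U$ inflations, $U\to0$ deflations) such that squares with horizontal inflations and vertical deflations are pullbacks iff pushouts, and cospans $W\rightarrowtail X\twoheadleftarrow V$ and spans $W\twoheadleftarrow U\rightarrowtail V$ complete to such biCartesian squares. Duality: functor $P:\mathcal{A}^{op}\to\mathcal{A}$, natural iso $\Theta:\mathrm{id}\Rightarrow PP^{op}$, $P(\Theta_U)\Theta_{P(U)}=\mathrm{id}$; $P$ exact ($P(0)\simeq0$, $\phi$ inflation iff $P(\phi)$ deflation, biCartesian squares preserved and reflected). Symmetric form $(M,\psi_M)$: iso $\psi_M:M\to P(M)$ with $P(\psi_M)\Theta_M=\psi_M$; $(M_1,\psi_1)\oplus(M_2,\psi_2)=(M_1\oplus M_2,\psi_1\oplus\psi_2)$. An inflation $j:U\rightarrowtail M$ is isotropic if $P(j)\psi_Mj=0$ and the induced monomorphism $U\to U^\perp$ is an inflation, where $U^\perp$ is a kernel of $P(j)\psi_M$. $\mathcal{A}$ is combinatorial if it has finite coproducts and for each inflation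 $j:U\rightarrowtail X_1\oplus X_2$ there exist inflations $j_k:U_k\rightarrowtail X_k$ and an isomorphism $f:U\to U_1\oplus U_2$ with $(j_1\oplus j_2)f=j$. *)

(* Defs.v *)
Set Implicit Arguments.
Unset Strict Implicit.

Record Cat := {
  Obj :> Type;
  Hom : Obj -> Obj -> Type;
  cid : forall X, Hom X X;
  comp : forall X Y Z, Hom Y Z -> Hom X Y -> Hom X Z;
  comp_assoc : forall X Y Z W (h : Hom Z W) (g : Hom Y Z) (f : Hom X Y),
      comp h (comp g f) = comp (comp h g) f;
  comp_id_l : forall X Y (f : Hom X Y), comp (cid Y) f = f;
  comp_id_r : forall X Y (f : Hom X Y), comp f (cid X) = f
}.
Arguments Hom {c} _ _.
Arguments cid {c} _.
Arguments comp {c X Y Z} _ _.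
Notation "g \o f" := (comp g f) (at level 40, left associativity).

Section Defs.
Variable C : Cat.

Definition is_iso (X Y : C) (f : Hom X Y) : Prop :=
  exists g : Hom Y X, g \o f = cid X /\ f \o g = cid Y.

Record ZeroObj := {
  zobj : C;
  zinit : forall X : C, Hom zobj X;
  zinit_uniq : forall X (f : Hom zobj X), f = zinit X;
  zterm : forall X : C, Hom X zobj;
  zterm_uniq : forall X (f : Hom X zobj), f = zterm X
}.

Variable Z : ZeroObj.
Definition zmor (X Y : C) : Hom X Y := zinit Z Y \o zterm Z X.

(* ---------- Squares
       U --a--> V
       |b       |c
       v        v
       W --d--> X                                       ---------- *)
Definition commutes (U V W X : C) (a : Hom U V) (b : Hom U W)
  (c : Hom V X) (d : Hom W X) : Prop := c \o a = d \o b.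

Definition is_pullback (U V W X : C) (a : Hom U V) (b : Hom U W)
  (c : Hom V X) (d : Hom W X) : Prop :=
  commutes a b c d /\
  forall (T : C) (p : Hom T V) (q : Hom T W), c \o p = d \o q ->
    exists h : Hom T U, (a \o h = p /\ b \o h = q) /\
      forall h' : Hom T U, a \o h' = p -> b \o h' = q -> h' = h.

Definition is_pushout (U V W X : C) (a : Hom U V) (b : Hom U W)
  (c : Hom V X) (d : Hom W X) : Prop :=
  commutes a b c d /\
  forall (T : C) (p : Hom V T) (q : Hom W T), p \o a = q \o b ->
    exists h : Hom X T, (h \o c = p /\ h \o d = q) /\
      forall h' : Hom X T, h' \o c = p -> h' \o d = q -> h' = h.

Definition is_bicartesian (U V W X : C) (a : Hom U V) (b : Hom U W)
  (c : Hom V X) (d : Hom W X) : Prop :=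
  is_pullback a b c d /\ is_pushout a b c d.

Record ProtoExact := {
  infl : forall X Y : C, Hom X Y -> Prop;
  defl : forall X Y : C, Hom X Y -> Prop;
  infl_iso : forall X Y (f : Hom X Y), is_iso f -> infl f;
  defl_iso : forall X Y (f : Hom X Y), is_iso f -> defl f;
  infl_comp : forall X Y W (g : Hom Y W) (f : Hom X Y),
      infl f -> infl g -> infl (g \o f);
  defl_comp : forall X Y W (g : Hom Y W) (f : Hom X Y),
      defl f -> defl g -> defl (g \o f);
  infl_zero : forall X, infl (zinit Z X);
  defl_zero : forall X, defl (zterm Z X);
  pb_iff_po : forall U V W X (a : Hom U V) (b : Hom U W) (c : Hom V X)
      (d : Hom W X), infl a -> infl d -> defl b -> defl c ->
      commutes a b c d -> (is_pullback a b c d <-> is_pushout a b c d);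
  cospan_compl : forall V W X (d : Hom W X) (c : Hom V X),
      infl d -> defl c ->
      exists (U : C) (a : Hom U V) (b : Hom U W),
        infl a /\ defl b /\ is_bicartesian a b c d;
  span_compl : forall U V W (a : Hom U V) (b : Hom U W),
      infl a -> defl b ->
      exists (X : C) (c : Hom V X) (d : Hom W X),
        infl d /\ defl c /\ is_bicartesian a b c d
}.

(* ---------- Binary coproducts (with the zero object: finite coproducts) *)
Record Coproducts := {
  cp : C -> C -> C;
  inj1 : forall X Y, Hom X (cp X Y);
  inj2 : forall X Y, Hom Y (cp X Y);
  copair : forall X Y T, Hom X T -> Hom Y T -> Hom (cp X Y) T;
  copair_inj1 : forall X Y T (f : Hom X T) (g : Hom Y T),
      copair f g \o inj1 X Y = f;
  copair_inj2 : forall X Y T (f : Hom X T) (g : Hom Y T),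
      copair f g \o inj2 X Y = g;
  copair_uniq : forall X Y T (h : Hom (cp X Y) T),
      h = copair (h \o inj1 X Y) (h \o inj2 X Y)
}.

Variable CP : Coproducts.
Local Notation "X (+) Y" := (cp CP X Y) (at level 50).

Definition cpmap (X1 X2 Y1 Y2 : C) (f1 : Hom X1 Y1) (f2 : Hom X2 Y2) :
  Hom (X1 (+) X2) (Y1 (+) Y2) :=
  copair CP (inj1 CP Y1 Y2 \o f1) (inj2 CP Y1 Y2 \o f2).

Definition cproj1 (X1 X2 : C) : Hom (X1 (+) X2) X1 :=
  copair CP (cid X1) (zmor X2 X1).
Definition cproj2 (X1 X2 : C) : Hom (X1 (+) X2) X2 :=
  copair CP (zmor X1 X2) (cid X2).

Record Duality := {
  Pobj : C -> C;
  Phom : forall X Y : C, Hom X Y -> Hom (Pobj Y) (Pobj X);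
  P_id : forall X, Phom (cid X) = cid (Pobj X);
  P_comp : forall X Y W (g : Hom Y W) (f : Hom X Y),
      Phom (g \o f) = Phom f \o Phom g;
  Theta : forall X, Hom X (Pobj (Pobj X));
  Theta_nat : forall X Y (f : Hom X Y),
      Theta Y \o f = Phom (Phom f) \o Theta X;
  Theta_iso : forall X, is_iso (Theta X);
  Theta_coh : forall X, Phom (Theta X) \o Theta (Pobj X) = cid (Pobj X)
}.

Variable E : ProtoExact.
Variable D : Duality.

Definition exact_duality : Prop :=
  (exists f : Hom (Pobj D (zobj Z)) (zobj Z), is_iso f) /\
  (forall X Y (f : Hom X Y), infl E f <-> defl E (Phom D f)) /\
  (forall U V W X (a : Hom U V) (b : Hom U W) (c : Hom V X) (d : Hom W X),
      infl E a -> infl E d -> defl E b -> defl E c -> commutes a b c d ->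
      (is_bicartesian a b c d <->
       is_bicartesian (Phom D c) (Phom D d) (Phom D a) (Phom D b))).

Definition Pcp (X1 X2 : C) :
  Hom (Pobj D X1 (+) Pobj D X2) (Pobj D (X1 (+) X2)) :=
  copair CP (Phom D (cproj1 X1 X2)) (Phom D (cproj2 X1 X2)).

Definition additive_duality : Prop :=
  forall X1 X2 : C, is_iso (Pcp X1 X2).

Definition combinatorial : Prop :=
  forall (U X1 X2 : C) (j : Hom U (X1 (+) X2)), infl E j ->
    exists (U1 U2 : C) (j1 : Hom U1 X1) (j2 : Hom U2 X2)
           (f : Hom U (U1 (+) U2)),
      infl E j1 /\ infl E j2 /\ is_iso f /\ cpmap j1 j2 \o f = j.

Definition symmetric_form (M : C) (psi : Hom M (Pobj D M)) : Prop :=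
  is_iso psi /\ Phom D psi \o Theta D M = psi.

Definition form_sum (M1 M2 : C) (psi1 : Hom M1 (Pobj D M1))
  (psi2 : Hom M2 (Pobj D M2)) : Hom (M1 (+) M2) (Pobj D (M1 (+) M2)) :=
  Pcp M1 M2 \o cpmap psi1 psi2.

Definition is_kernel (K X Y : C) (k : Hom K X) (g : Hom X Y) : Prop :=
  g \o k = zmor K Y /\
  forall (T : C) (t : Hom T X), g \o t = zmor T Y ->
    exists h : Hom T K, k \o h = t /\
      forall h' : Hom T K, k \o h' = t -> h' = h.

Definition isotropic (M : C) (psi : Hom M (Pobj D M)) (U : C)
  (j : Hom U M) : Prop :=
  infl E j /\
  Phom D j \o psi \o j = zmor U (Pobj D U) /\
  exists (Uperp : C) (k : Hom Uperp M) (u : Hom U Uperp),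
    is_kernel k (Phom D j \o psi) /\ k \o u = j /\ infl E u.

End Defs.

Notation "X (+) Y" := (cp _ X Y) (at level 50).

(* Main.v *)
Require Import Defs.

Lemma cA (C : Cat) (X Y Z W : C) (h : Hom Z W) (g : Hom Y Z) (f : Hom X Y) :
  h \o (g \o f) = h \o g \o f.
Proof. apply comp_assoc. Qed.
Arguments cA {C X Y Z W} h g f.

Lemma zmor_l (C : Cat) (Z : ZeroObj C) (X Y W : C) (g : Hom Y W) :
  g \o zmor Z X Y = zmor Z X W.
Proof. unfold zmor. rewrite cA. f_equal. apply zinit_uniq. Qed.

Lemma zmor_r (C : Cat) (Z : ZeroObj C) (X Y W : C) (f : Hom W X) :
  zmor Z X Y \o f = zmor Z W Y.
Proof. unfold zmor. rewrite <- cA. f_equal. apply zterm_uniq. Qed.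

Lemma copair_ext (C : Cat) (CP : Coproducts C) (X Y T : C) (h h' : Hom (cp CP X Y) T) :
  h \o inj1 CP X Y = h' \o inj1 CP X Y -> h \o inj2 CP X Y = h' \o inj2 CP X Y -> h = h'.
Proof.
  intros H1 H2. rewrite (copair_uniq h), (copair_uniq h'), H1, H2. reflexivity.
Qed.

Lemma cpmap_inj1 (C : Cat) (CP : Coproducts C) (X1 X2 Y1 Y2 : C) (f1 : Hom X1 Y1) (f2 : Hom X2 Y2) :
  cpmap CP f1 f2 \o inj1 CP X1 X2 = inj1 CP Y1 Y2 \o f1.
Proof. unfold cpmap. apply copair_inj1. Qed.

Lemma cpmap_inj2 (C : Cat) (CP : Coproducts C) (X1 X2 Y1 Y2 : C) (f1 : Hom X1 Y1) (f2 : Hom X2 Y2) :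
  cpmap CP f1 f2 \o inj2 CP X1 X2 = inj2 CP Y1 Y2 \o f2.
Proof. unfold cpmap. apply copair_inj2. Qed.

Lemma cpmap_comp (C : Cat) (CP : Coproducts C) (X1 X2 Y1 Y2 W1 W2 : C)
  (f1 : Hom Y1 W1) (f2 : Hom Y2 W2) (g1 : Hom X1 Y1) (g2 : Hom X2 Y2) :
  cpmap CP f1 f2 \o cpmap CP g1 g2 = cpmap CP (f1 \o g1) (f2 \o g2).
Proof.
  apply copair_ext.
  - rewrite <- cA, !cpmap_inj1, cA, cpmap_inj1, cA. reflexivity.
  - rewrite <- cA, !cpmap_inj2, cA, cpmap_inj2, cA. reflexivity.
Qed.

Lemma cpmap_id (C : Cat) (CP : Coproducts C) (X1 X2 : C) :
  cpmap CP (cid X1) (cid X2) = cid _.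
Proof.
  apply copair_ext.
  - rewrite cpmap_inj1, comp_id_l, comp_id_r. reflexivity.
  - rewrite cpmap_inj2, comp_id_l, comp_id_r. reflexivity.
Qed.

Lemma cproj1_inj1 (C : Cat) (Z : ZeroObj C) (CP : Coproducts C) (X1 X2 : C) :
  cproj1 Z CP X1 X2 \o inj1 CP X1 X2 = cid X1.
Proof. unfold cproj1. apply copair_inj1. Qed.

Lemma cproj2_inj2 (C : Cat) (Z : ZeroObj C) (CP : Coproducts C) (X1 X2 : C) :
  cproj2 Z CP X1 X2 \o inj2 CP X1 X2 = cid X2.
Proof. unfold cproj2. apply copair_inj2. Qed.

Lemma cproj1_cpmap (C : Cat) (Z : ZeroObj C) (CP : Coproducts C) (X1 X2 Y1 Y2 : C)
  (f1 : Hom X1 Y1) (f2 : Hom X2 Y2) :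
  cproj1 Z CP Y1 Y2 \o cpmap CP f1 f2 = f1 \o cproj1 Z CP X1 X2.
Proof.
  apply copair_ext.
  - rewrite <- !cA, cpmap_inj1, cproj1_inj1, cA, cproj1_inj1, comp_id_l, comp_id_r. reflexivity.
  - rewrite <- !cA, cpmap_inj2, cA. unfold cproj1. rewrite !copair_inj2.
    rewrite zmor_r, zmor_l. reflexivity.
Qed.

Lemma cproj2_cpmap (C : Cat) (Z : ZeroObj C) (CP : Coproducts C) (X1 X2 Y1 Y2 : C)
  (f1 : Hom X1 Y1) (f2 : Hom X2 Y2) :
  cproj2 Z CP Y1 Y2 \o cpmap CP f1 f2 = f2 \o cproj2 Z CP X1 X2.
Proof.
  apply copair_ext.
  - rewrite <- !cA, cpmap_inj1, cA. unfold cproj2. rewrite !copair_inj1.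
    rewrite zmor_r, zmor_l. reflexivity.
  - rewrite <- !cA, cpmap_inj2, cproj2_inj2, cA, cproj2_inj2, comp_id_l, comp_id_r. reflexivity.
Qed.

Lemma iso_comp (C : Cat) (X Y W : C) (g : Hom Y W) (f : Hom X Y) :
  is_iso f -> is_iso g -> is_iso (g \o f).
Proof.
  intros [f' [Hf1 Hf2]] [g' [Hg1 Hg2]]. exists (f' \o g'). split.
  - rewrite cA, <- (cA f' g' g), Hg1, comp_id_r. exact Hf1.
  - rewrite cA, <- (cA g f f'), Hf2, comp_id_r. exact Hg2.
Qed.

Lemma cpmap_iso (C : Cat) (CP : Coproducts C) (X1 X2 Y1 Y2 : C) (f1 : Hom X1 Y1) (f2 : Hom X2 Y2) :
  is_iso f1 -> is_iso f2 -> is_iso (cpmap CP f1 f2).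
Proof.
  intros [g1 [H1 H1']] [g2 [H2 H2']]. exists (cpmap CP g1 g2).
  rewrite !cpmap_comp, H1, H1', H2, H2', !cpmap_id. split; reflexivity.
Qed.

Lemma P_iso (C : Cat) (D : Duality C) (X Y : C) (f : Hom X Y) :
  is_iso f -> is_iso (Phom D f).
Proof.
  intros [g [H1 H2]]. exists (Phom D g). rewrite <- !P_comp, H1, H2, !P_id. split; reflexivity.
Qed.

Lemma infl_monic (C : Cat) (Z : ZeroObj C) (E : ProtoExact Z) (X Y T : C) (a : Hom X Y)
  (p q : Hom T X) : infl E a -> a \o p = a \o q -> p = q.
Proof.
  intros Ha Hpq.
  destruct (span_compl Ha (defl_zero E X)) as (W & c & d & _ & _ & [[Hcom Hpb] _]).
  unfold commutes in Hcom.
  assert (Hc : c \o (a \o p) = d \o zterm Z T).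
  { rewrite cA, Hcom, <- cA. f_equal. apply zterm_uniq. }
  destruct (Hpb T _ _ Hc) as (h & _ & Hu).
  rewrite (Hu p eq_refl ltac:(apply zterm_uniq)).
  symmetry. apply Hu. symmetry; exact Hpq. apply zterm_uniq.
Qed.

Lemma kernel_infl (C : Cat) (Z : ZeroObj C) (E : ProtoExact Z) (K X Y : C) (k : Hom K X)
  (Q : Hom X Y) : defl E Q -> is_kernel Z k Q -> infl E k.
Proof.
  intros HQ [Hk0 Hk].
  destruct (cospan_compl (infl_zero E Y) HQ) as (K0 & a & b & Ha & _ & [[Hcom Hpb] _]).
  unfold commutes in Hcom.
  assert (Ha0 : Q \o a = zmor Z K0 Y).
  { rewrite Hcom. unfold zmor. f_equal. apply zterm_uniq. }
  destruct (Hk K0 a Ha0) as (phi' & Hphi' & _).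
  assert (Hk' : Q \o k = zinit Z Y \o zterm Z K) by exact Hk0.
  destruct (Hpb K k (zterm Z K) Hk') as (phi & [Hphi _] & _).
  assert (E1 : phi \o phi' = cid K0).
  { eapply infl_monic; [exact Ha|]. rewrite cA, Hphi, Hphi', comp_id_r. reflexivity. }
  assert (E2 : phi' \o phi = cid K).
  { destruct (Hk K k Hk0) as (h & _ & Hu).
    rewrite (Hu (phi' \o phi)), (Hu (cid K)); try reflexivity.
    apply comp_id_r. rewrite cA, Hphi', Hphi. reflexivity. }
  rewrite <- Hphi. apply infl_comp; [| exact Ha].
  apply infl_iso. exists phi'. split; assumption.
Qed.


Lemma key1 (C : Cat) (Z : ZeroObj C) (CP : Coproducts C) (D : Duality C)
  (M1 M2 U T : C) (psi1 : Hom M1 (Pobj D M1)) (psi2 : Hom M2 (Pobj D M2))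
  (i : Hom U (cp CP M1 M2)) (t : Hom T M1) :
  Phom D i \o form_sum Z CP psi1 psi2 \o (inj1 CP M1 M2 \o t)
  = Phom D (cproj1 Z CP M1 M2 \o i) \o psi1 \o t.
Proof.
  unfold form_sum. rewrite P_comp. rewrite <- !cA. f_equal.
  rewrite (cA (cpmap CP psi1 psi2)), cpmap_inj1, (cA (Pcp Z CP D M1 M2)).
  rewrite (cA (Pcp Z CP D M1 M2) (inj1 _ _ _)).
  unfold Pcp at 1. rewrite copair_inj1, <- cA. reflexivity.
Qed.

Lemma key2 (C : Cat) (Z : ZeroObj C) (CP : Coproducts C) (D : Duality C)
  (M1 M2 U T : C) (psi1 : Hom M1 (Pobj D M1)) (psi2 : Hom M2 (Pobj D M2))
  (i : Hom U (cp CP M1 M2)) (t : Hom T M2) :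
  Phom D i \o form_sum Z CP psi1 psi2 \o (inj2 CP M1 M2 \o t)
  = Phom D (cproj2 Z CP M1 M2 \o i) \o psi2 \o t.
Proof.
  unfold form_sum. rewrite P_comp. rewrite <- !cA. f_equal.
  rewrite (cA (cpmap CP psi1 psi2)), cpmap_inj2, (cA (Pcp Z CP D M1 M2)).
  rewrite (cA (Pcp Z CP D M1 M2) (inj2 _ _ _)).
  unfold Pcp at 1. rewrite copair_inj2, <- cA. reflexivity.
Qed.

Lemma comp_isotropic (C : Cat) (Z : ZeroObj C) (E : ProtoExact Z) (D : Duality C)
  (M Mt Y Uk K KK : C) (psi : Hom M (Pobj D M)) (Q : Hom Mt Y) (k : Hom KK Mt)
  (kk : Hom K M) (u : Hom Uk K) (inj : Hom M Mt) (proj : Hom Mt M)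
  (L : Hom (Pobj D Uk) Y) (R : Hom Y (Pobj D Uk)) (pk : Hom KK K) (s : Hom K KK) :
  infl E kk -> infl E u -> is_kernel Z k Q -> R \o L = cid _ -> proj \o inj = cid _ ->
  proj \o k = kk \o pk -> inj \o kk = k \o s ->
  (forall T (t : Hom T M), Q \o (inj \o t) = L \o (Phom D (kk \o u) \o psi \o t)) ->
  isotropic E psi (kk \o u).
Proof.
  intros Hkk Hu [Hk0 Hk] HRL Hpi Hpk Hs Hkey.
  assert (Hcanc : forall T (x : Hom T (Pobj D Uk)), L \o x = zmor Z T Y -> x = zmor Z T _).
  { intros T x Hx. rewrite <- (comp_id_l x), <- HRL, <- cA, Hx. apply zmor_l. }
  assert (Hak : Phom D (kk \o u) \o psi \o kk = zmor Z K _).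
  { apply Hcanc. rewrite <- Hkey, Hs, cA, Hk0. apply zmor_r. }
  split; [apply infl_comp; assumption|]. split.
  { rewrite cA, Hak. apply zmor_r. }
  exists K, kk, u. split; [|split; [reflexivity|exact Hu]].
  split; [exact Hak|].
  intros T t Ht.
  assert (Ht' : Q \o (inj \o t) = zmor Z T Y).
  { rewrite Hkey, Ht. apply zmor_l. }
  destruct (Hk T _ Ht') as (x & Hx & _).
  exists (pk \o x). split.
  - rewrite cA, <- Hpk, <- cA, Hx, cA, Hpi. apply comp_id_l.
  - intros h' Hh'. eapply infl_monic; [exact Hkk|].
    rewrite Hh', cA, <- Hpk, <- cA, Hx, cA, Hpi. symmetry. apply comp_id_l.
Qed.

Theorem lemma1p7 (C : Cat) (Z : ZeroObj C) (E : ProtoExact Z)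
  (CP : Coproducts C) (D : Duality C)
  (Hexact : exact_duality E D) (Hadd : additive_duality Z CP D)
  (Hcomb : combinatorial CP E)
  (M1 M2 : C) (psi1 : Hom M1 (Pobj D M1)) (psi2 : Hom M2 (Pobj D M2))
  (Hpsi1 : symmetric_form psi1) (Hpsi2 : symmetric_form psi2)
  (U : C) (i : Hom U (cp CP M1 M2))
  (Hi : isotropic E (form_sum Z CP psi1 psi2) i) :
  exists (U1 U2 : C) (i1 : Hom U1 M1) (i2 : Hom U2 M2)
         (f : Hom U (cp CP U1 U2)),
    isotropic E psi1 i1 /\ isotropic E psi2 i2 /\
    is_iso f /\ cpmap CP i1 i2 \o f = i.
Proof.
  destruct Hi as (Hinf & _ & Up & k & u & Hker & Hku & Hu).
  destruct Hexact as (_ & Hid & _).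
  assert (Hpsi : is_iso (form_sum Z CP psi1 psi2)).
  { unfold form_sum. apply iso_comp; [apply cpmap_iso; [apply Hpsi1|apply Hpsi2]|apply Hadd]. }
  assert (HQ : defl E (Phom D i \o form_sum Z CP psi1 psi2)).
  { apply defl_comp; [apply defl_iso; exact Hpsi| apply Hid; exact Hinf]. }
  assert (Hkinf : infl E k) by (eapply kernel_infl; [exact HQ| exact Hker]).
  destruct (Hcomb _ _ _ k Hkinf) as (K1 & K2 & k1 & k2 & g & Hk1 & Hk2 & Hg & Hkg).
  assert (Hgu : infl E (g \o u)) by (apply infl_comp; [exact Hu| apply infl_iso; exact Hg]).
  destruct (Hcomb _ _ _ _ Hgu) as (U1 & U2 & u1 & u2 & h & Hu1 & Hu2 & Hh & Hugh).
  assert (Hieq : i = cpmap CP (k1 \o u1) (k2 \o u2) \o h).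
  { rewrite <- cpmap_comp, <- cA, Hugh, cA, Hkg, Hku. reflexivity. }
  destruct Hg as [gi [Hg1 Hg2]].
  destruct Hh as [hi [Hh1 Hh2]].
  exists U1, U2, (k1 \o u1), (k2 \o u2), h.
  split; [|split; [|split; [exists hi; split; assumption| symmetry; exact Hieq]]].
  - apply (comp_isotropic C Z E D _ _ _ _ _ _ _ (Phom D i \o form_sum Z CP psi1 psi2) k _ _
             (inj1 CP M1 M2) (cproj1 Z CP M1 M2)
             (Phom D (cproj1 Z CP U1 U2 \o h)) (Phom D (hi \o inj1 CP U1 U2))
             (cproj1 Z CP K1 K2 \o g) (gi \o inj1 CP K1 K2)).
    + exact Hk1.
    + exact Hu1.
    + exact Hker.
    + rewrite <- P_comp, <- cA, (cA h hi), Hh2, comp_id_l, cproj1_inj1. apply P_id.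
    + apply cproj1_inj1.
    + rewrite <- Hkg, cA, cproj1_cpmap, cA. reflexivity.
    + rewrite <- Hkg, <- cA, (cA g gi), Hg2, comp_id_l, cpmap_inj1. reflexivity.
    + intros T t. rewrite key1.
      assert (Hc : cproj1 Z CP M1 M2 \o i = (k1 \o u1) \o (cproj1 Z CP U1 U2 \o h))
        by (rewrite Hieq, cA, cproj1_cpmap, <- cA; reflexivity).
      rewrite Hc, P_comp, <- !cA. reflexivity.
  - apply (comp_isotropic C Z E D _ _ _ _ _ _ _ (Phom D i \o form_sum Z CP psi1 psi2) k _ _
             (inj2 CP M1 M2) (cproj2 Z CP M1 M2)
             (Phom D (cproj2 Z CP U1 U2 \o h)) (Phom D (hi \o inj2 CP U1 U2))
             (cproj2 Z CP K1 K2 \o g) (gi \o inj2 CP K1 K2)).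
    + exact Hk2.
    + exact Hu2.
    + exact Hker.
    + rewrite <- P_comp, <- cA, (cA h hi), Hh2, comp_id_l, cproj2_inj2. apply P_id.
    + apply cproj2_inj2.
    + rewrite <- Hkg, cA, cproj2_cpmap, cA. reflexivity.
    + rewrite <- Hkg, <- cA, (cA g gi), Hg2, comp_id_l, cpmap_inj2. reflexivity.
    + intros T t. rewrite key2.
      assert (Hc : cproj2 Z CP M1 M2 \o i = (k2 \o u2) \o (cproj2 Z CP U1 U2 \o h))
        by (rewrite Hieq, cA, cproj2_cpmap, <- cA; reflexivity).
      rewrite Hc, P_comp, <- !cA. reflexivity.
Qed.
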